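(* Let $k$ be a positive integer. For all positive integers $m,n$, $R_k^m\cong R_k^n$ if and only if $m\equiv n\pmod k$.
   Context: $\mathbb{N}=\{1,2,3,\dots\}$. $R$ denotes the ring of all $\mathbb{N}\times\mathbb{N}$ integer matrices with only finitely many nonzero entries in each row and each column, with entrywise addition and multiplication $(AB)_{i,j}=\sum_{l\ge1}a_{i,l}b_{l,j}$. Fix a positive integer $k$. Partition $\mathbb{N}$ into consecutive blocks $J_1=\{1\}$ and, for $m\ge2$, $J_m=\{2+k(m-2),\dots,1+k(m-1)\}$. For $A\in R$, the block $A^{m,n}$ is the submatrix with rows indexed by $J_m$ and columns by $J_n$. $R_k$ is the subring of $A\in R$ such that for all but finitely many pairs $(m,n)$ with $m,n\ge2$, $A^{m,n}=cI_k$ for some integer $c$. For a ring $S$, $S^n$ is the free left $S$-module of $n$-tuples with componentwise operations; $S^m\cong S^n$ means there is a bijective left-$S$-linear map $S^m\to S^n$, equivalently there exist $X\in M_{m\times n}(S)$, $Y\in M_{n\times m}(S)$ with $XY=I_m$, $YX=I_n$. *)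

(* Defs.v *)
From mathcomp Require Import all_boot all_order all_algebra.
Set Implicit Arguments. Unset Strict Implicit. Unset Printing Implicit Defensive.
Import GRing.Theory Num.Theory.
Local Open Scope ring_scope.

(* Infinite integer matrices, indexed 0-based: paper index i corresponds to i-1 here. *)
Definition infmx := nat -> nat -> int.

Definition row_finite (A : infmx) : Prop :=
  forall i : nat, exists N : nat, forall j : nat, (N <= j)%N -> A i j = 0.
Definition col_finite (A : infmx) : Prop :=
  forall j : nat, exists N : nat, forall i : nat, (N <= i)%N -> A i j = 0.
Definition inR (A : infmx) : Prop := row_finite A /\ col_finite A.

(* Blocks (0-based): J_1 = {0}; for b >= 0 the block J_{b+2} is
   {1 + k*b + s | s < k}. *)
Definition inRk (k : nat) (A : infmx) : Prop :=
  inR A /\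
  exists B : nat, forall b b' : nat, (B <= b)%N \/ (B <= b')%N ->
    exists c : int, forall s t : nat, (s < k)%N -> (t < k)%N ->
      A (1 + k * b + s)%N (1 + k * b' + t)%N = (if s == t then c else 0).

Definition idR : infmx := fun i j => if i == j then 1 else 0.
Definition zeroR : infmx := fun _ _ => 0.

Definition mxR (a b : nat) := 'I_a -> 'I_b -> infmx.

(* (X Y)_{pq} = sum_r X_{pr} Y_{rq}, with products in R:
   ((X Y)_{pq})_{ij} = sum_r sum_l (X_{pr})_{il} (Y_{rq})_{lj}, the inner sum
   being finite by row-finiteness; stated as eventual stabilization of
   truncated sums. *)
Definition mx_prod_is {a b c : nat} (X : mxR a b) (Y : mxR b c) (Z : mxR a c) : Prop :=
  forall (p : 'I_a) (q : 'I_c) (i j : nat), exists N : nat, forall M : nat, (N <= M)%N ->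
    \sum_(r < b) \sum_(l < M) X p r i l * Y r q l j = Z p q i j.

Definition mx_idR (a : nat) : mxR a a := fun p q => if p == q then idR else zeroR.

(* R_k^m is isomorphic to R_k^n as left R_k-modules, via the matrix criterion. *)
Definition Rk_free_iso (k m n : nat) : Prop :=
  exists (X : mxR m n) (Y : mxR n m),
    (forall p q, inRk k (X p q)) /\ (forall q p, inRk k (Y q p)) /\
    mx_prod_is X Y (@mx_idR m) /\ mx_prod_is Y X (@mx_idR n).

(* Main.v *)
Require Import Defs.
From mathcomp Require Import all_boot all_order all_algebra.
From mathcomp Require Import zify ring.
Set Implicit Arguments. Unset Strict Implicit. Unset Printing Implicit Defensive.
Import GRing.Theory Num.Theory.

Lemma divmk k x s : s < k -> (k * x + s) %/ k = x.
Proof. move=> hs; have hk: 0 < k by lia. by rewrite mulnC divnMDl // divn_small ?addn0. Qed.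
Lemma modmk k x s : s < k -> (k * x + s) %% k = s.
Proof. move=> hs; rewrite mulnC modnMDl modn_small //. Qed.
Lemma eqmk k x y s t : s < k -> t < k -> (k*x+s == k*y+t) = (x == y) && (s == t).
Proof.
move=> hs ht; apply/eqP/andP => [E|[/eqP-> /eqP->]] //.
split; apply/eqP.
- by rewrite -(divmk x hs) E divmk.
- by rewrite -(modmk x hs) E modmk.
Qed.

Section Constr.
Variables (k m t : nat).
Hypotheses (hk : 0 < k) (hm : 0 < m).
Let n := m + k * t.

Definition sig (p i : nat) : nat * nat :=
  if i is i'.+1 then
    let b := i' %/ k in let s := i' %% k in let u := b * m + p in
    if u < t then (m + k * u + s, 0) else
    let v := u - t in (v %% n, 1 + k * (v %/ n) + s)
  else (p, 0).

Definition tau (q j : nat) : nat * nat :=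
  if j is j'.+1 then
    let b := j' %/ k in let s := j' %% k in let u := b * n + q + t in
    (u %% m, 1 + k * (u %/ m) + s)
  else if q < m then (q, 0) else
    let w := q - m in let u := w %/ k in let s := w %% k in
    (u %% m, 1 + k * (u %/ m) + s).

Lemma hn : 0 < n. Proof. rewrite /n; lia. Qed.

Lemma tau_sig p i : p < m -> tau (sig p i).1 (sig p i).2 = (p, i) /\ (sig p i).1 < n.
Proof.
move=> hp; case: i => [|i] /=; first by rewrite hp; split => //; rewrite /n; lia.
have hs : i %% k < k by rewrite ltn_mod.
have ei : i = k * (i %/ k) + i %% k by rewrite mulnC -divn_eq.
have um : (i %/ k * m + p) %% m = p by rewrite modnMDl modn_small.
have ud : (i %/ k * m + p) %/ m = i %/ k by rewrite divnMDl // (divn_small hp) addn0.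
case: ifP => hu /=.
- have -> : (m + k * (i %/ k * m + p) + i %% k < m) = false by rewrite -addnA ltnNge leq_addr.
  rewrite -addnA addKn divmk // modmk // um ud; split; first by congr (_, _); lia.
  rewrite /n.
  have : k * (i %/ k * m + p) + i %% k < k * t.
    apply: (leq_trans (n := k * (i %/ k * m + p).+1)); first by rewrite mulnS; lia.
    by rewrite leq_pmul2l.
  lia.
- set v := i %/ k * m + p - t.
  have hv : v %% n < n by rewrite ltn_mod hn.
  rewrite add0n divmk // modmk // -divn_eq /v subnK ?um ?ud; last by lia.
  split => //; congr (_, _); lia.
Qed.

Lemma sig_tau q j : q < n -> sig (tau q j).1 (tau q j).2 = (q, j) /\ (tau q j).1 < m.
Proof.
move=> hq; case: j => [|j] /=.
- case: ifP => hqm /=; first by split.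
  set w := q - m.
  have hw : w < k * t by rewrite /w; move: hq; rewrite /n; lia.
  have hwk : w %/ k < t by rewrite ltn_divLR // mulnC.
  have ew : w = k * (w %/ k) + w %% k by rewrite mulnC -divn_eq.
  rewrite add0n divmk ?ltn_mod // modmk ?ltn_mod // -divn_eq hwk.
  split => //.
  congr (_, _); move: hqm; rewrite /w in ew *; lia.
- set u := j %/ k * n + q + t.
  rewrite add0n divmk ?ltn_mod // modmk ?ltn_mod // -divn_eq.
  have -> : (u < t) = false by rewrite ltnNge /u leq_addl.
  rewrite /u addnK modnMDl modn_small // divnMDl ?hn // (divn_small hq) addn0.
  split => //; congr (_, _); rewrite [in RHS](divn_eq j k); lia.
Qed.
End Constr.


Section Iso.
Local Open Scope ring_scope.
Variables (k m t : nat).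
Hypotheses (hk : (0 < k)%N) (hm : (0 < m)%N).
Local Notation n := (m + k * t)%N.
Local Notation sig := (sig k m t).
Local Notation tau := (tau k m t).

Definition Xm : mxR m n := fun p q i j => if sig p i == ((q : nat), j) then 1 else 0.
Definition Ym : mxR n m := fun q p j i => Xm p q i j.

Lemma sum1 (N a : nat) (v : int) : (a < N)%N ->
  \sum_(i < N) (if (i : nat) == a then v else 0) = v.
Proof.
move=> ha; rewrite (bigD1 (Ordinal ha)) //= eqxx big1 ?addr0 // => i hi.
case: eqP => // ei; case/eqP: hi; exact: val_inj.
Qed.

Lemma sum2 (N1 N2 a c : nat) (v : int) : (a < N1)%N -> (c < N2)%N ->
  \sum_(i < N1) \sum_(j < N2) (if (i : nat) == a then (if (j : nat) == c then v else 0) else 0) = v.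
Proof.
move=> ha hc; transitivity (\sum_(i < N1) (if (i : nat) == a then v else 0)); last exact: sum1.
apply: eq_bigr => i _.
case: ifP => _; first exact: sum1.
by rewrite big1.
Qed.

Lemma sig_inj p p' i i' : (p < m)%N -> (p' < m)%N ->
  (sig p i == sig p' i') = ((p == p') && (i == i')).
Proof.
move=> hp hp'; apply/eqP/andP => [E|[/eqP-> /eqP->]] //.
have := (@tau_sig k m t hk hm p i hp).1; rewrite E (@tau_sig k m t hk hm p' i' hp').1.
by case=> -> ->.
Qed.

Lemma XY : mx_prod_is Xm Ym (@mx_idR m).
Proof.
move=> p p' i i'; exists (sig p i).2.+1 => M hM.
have [_ ha] := @tau_sig k m t hk hm p i (ltn_ord p).
rewrite (eq_bigr (fun q : 'I_n => \sum_(j < M) (if (q : nat) == (sig p i).1 then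
   (if (j : nat) == (sig p i).2 then (if sig p' i' == sig p i then 1 else 0) else 0) else 0))); last first.
  move=> q _; apply: eq_bigr => j _; rewrite /Ym /Xm.
  case E: (sig p i == ((q : nat), (j : nat))).
    move/eqP: E => E; rewrite E /= !eqxx mul1r.
    by case: (sig p' i' == _).
  rewrite mul0r; case: eqP => // Eq; case: eqP => // Ej.
  by move: E; rewrite Eq Ej -surjective_pairing eqxx.
rewrite sum2 //.
rewrite sig_inj ?ltn_ord // /mx_idR.
case: (p =P p') => [<-|Hp]; first by rewrite !eqxx /= /idR eq_sym.
have -> : ((p' : nat) == p) = false.
  by apply/eqP => E; apply: Hp; apply: val_inj.
by [].
Qed.

Lemma YX : mx_prod_is Ym Xm (@mx_idR n).
Proof.
move=> q q' j j'; exists (tau q j).2.+1 => M hM.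
have [Est ha] := @sig_tau k m t hk hm q j (ltn_ord q).
rewrite (eq_bigr (fun r : 'I_m => \sum_(l < M) (if (r : nat) == (tau q j).1 then
   (if (l : nat) == (tau q j).2 then (if ((q : nat), j) == ((q' : nat), j') then 1 else 0) else 0) else 0))); last first.
  move=> r _; apply: eq_bigr => l _; rewrite /Ym /Xm.
  case E: (sig r l == ((q : nat), j)).
    move/eqP: E => E; rewrite E /=.
    have := (@tau_sig k m t hk hm r l (ltn_ord r)).1; rewrite E /= => ->.
    rewrite !eqxx mul1r.
    by case: (_ == _).
  rewrite mul0r; case: eqP => // Eq; case: eqP => // El.
  by move: E; rewrite Eq El Est eqxx.
rewrite sum2 // /mx_idR xpair_eqE.
case: (q =P q') => [<-|Hq]; first by rewrite !eqxx /= /idR.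
have -> : ((q : nat) == q') = false.
  by apply/eqP => E; apply: Hq; apply: val_inj.
by [].
Qed.

Lemma Xm_inRk p q : inRk k (Xm p q).
Proof.
split; first split.
- move=> i; exists (sig p i).2.+1 => j hj; rewrite /Xm.
  case: eqP => // E; move: hj; rewrite E /=; lia.
- move=> j; exists (tau q j).2.+1 => i hi; rewrite /Xm.
  case: eqP => // E.
  have := (@tau_sig k m t hk hm p i (ltn_ord p)).1; rewrite E /= => E2.
  move: hi; rewrite E2 /=; lia.
- exists 0%N => b b' _.
  exists (if (b * m + p < t)%N then 0 else
           (if (((b * m + p - t) %% n)%N == q) && (((b * m + p - t) %/ n)%N == b') then 1 else 0)).
  move=> s u hs hu; rewrite /Xm.
  have -> : (1 + k * b + s = (k * b + s).+1)%N by rewrite add1n addSn.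
  rewrite /sig divmk // modmk //.
  case: ltnP => _.
    rewrite xpair_eqE andbC.
    have -> : (0 == 1 + k * b' + u)%N = false by rewrite add1n addSn.
    by case: (s == u).
  rewrite xpair_eqE -!addnA eqn_add2l eqmk //.
  by do 3 case: eqP => _.
Qed.
End Iso.

Lemma inRk_tr k A : inRk k A -> inRk k (fun i j => A j i).
Proof.
case=> [[hr hc] [B hB]]; split; first by split.
exists B => b b' hb; have [|c hc'] := hB b' b; first by case: hb; [right|left].
by exists c => s u hs hu; rewrite hc' // eq_sym.
Qed.

Lemma iso_step k m t : (0 < k)%N -> (0 < m)%N -> Rk_free_iso k m (m + k * t).
Proof.
move=> hk hm; exists (@Xm k m t), (@Ym k m t); split; [|split; [|split]].
- by move=> p q; apply: Xm_inRk.
- by move=> q p; apply: (inRk_tr (Xm_inRk hk hm p q)).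
- exact: XY.
- exact: YX.
Qed.

Lemma iso_sym k m n : Rk_free_iso k m n -> Rk_free_iso k n m.
Proof. by case=> X [Y [h1 [h2 [h3 h4]]]]; exists Y, X. Qed.


Section Inv.
Local Open Scope ring_scope.

Definition bb k (A : infmx) B := forall b b' : nat, (B <= b)%N \/ (B <= b')%N ->
  exists c : int, forall s t : nat, (s < k)%N -> (t < k)%N ->
    A (1 + k * b + s)%N (1 + k * b' + t)%N = (if s == t then c else 0).

Lemma bb_mono k A B B' : bb k A B -> (B <= B')%N -> bb k A B'.
Proof. by move=> h hB b b' hb; apply: h; case: hb => h'; [left|right]; lia. Qed.

Lemma ubound (T : eqType) (s : seq T) (P : T -> nat -> Prop) :
  (forall x, x \in s -> exists N, forall M, (N <= M)%N -> P x M) ->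
  exists N, forall x, x \in s -> forall M, (N <= M)%N -> P x M.
Proof.
elim: s => [|y s IH] h; first by exists 0%N => x; rewrite in_nil.
have [N1 h1] := h y (mem_head y s).
have [N2 h2] : exists N, forall x, x \in s -> forall M, (N <= M)%N -> P x M.
  by apply: IH => x hx; apply: h; rewrite in_cons hx orbT.
exists (maxn N1 N2) => x; rewrite in_cons => /orP [/eqP->|hx] M hM.
  by apply: h1; move: hM; rewrite geq_max => /andP[].
by apply: h2 => //; move: hM; rewrite geq_max => /andP[].
Qed.

Lemma ubound_fin (T : finType) (P : T -> nat -> Prop) :
  (forall x, exists N, forall M, (N <= M)%N -> P x M) ->
  exists N, forall x M, (N <= M)%N -> P x M.
Proof.
move=> h; have [N hN] := @ubound _ (enum T) P (fun x _ => h x).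
by exists N => x; apply: hN; rewrite mem_enum.
Qed.

Lemma ubound_nat H (P : nat -> nat -> Prop) :
  (forall x, (x < H)%N -> exists N, forall M, (N <= M)%N -> P x M) ->
  exists N, forall x, (x < H)%N -> forall M, (N <= M)%N -> P x M.
Proof.
move=> h; have [N hN] : exists N, forall x, x \in iota 0 H -> forall M, (N <= M)%N -> P x M.
  by apply: ubound => x; rewrite mem_iota add0n => /andP[_ hx]; apply: h.
by exists N => x hx; apply: hN; rewrite mem_iota.
Qed.

Lemma sum_blocks (f : nat -> int) a k D :
  \sum_(a <= l < a + k * D) f l = \sum_(b < D) \sum_(s < k) f (a + k * b + s)%N.
Proof.
elim: D => [|D IH]; first by rewrite muln0 addn0 big_geq // big_ord0.
rewrite big_ord_recr /= -IH (@big_cat_nat _ _ _ (a + k * D)%N) /=; last 2 first.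
- exact: leq_addr.
- by rewrite leq_add2l leq_mul2l ltnW ?orbT.
congr (_ + _); rewrite -{1}[(a + k * D)%N]add0n big_addn.
have -> : (a + k * D.+1 - (a + k * D) = k)%N by rewrite mulnS; lia.
by rewrite big_mkord; apply: eq_bigr => i _; rewrite addnC.
Qed.

Lemma cross_dvd k (A C : infmx) B D : (0 < k)%N -> bb k A B -> bb k C B ->
  (forall l, (1 + k * B <= l)%N -> A 0%N l = 0) ->
  (k%:Z %| \sum_(0 <= i < 1 + k * B) \sum_(1 + k * B <= l < 1 + k * B + k * D) A i l * C l i)%Z.
Proof.
move=> hk hA hC h0.
rewrite big_ltn // big1_seq ?add0r; last first.
  move=> l /andP[_]; rewrite mem_index_iota => /andP[hl _]; by rewrite h0 // mul0r.
rewrite sum_blocks; apply: rpred_sum => b _.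
under eq_bigr => s _ do rewrite sum_blocks.
rewrite exchange_big; apply: rpred_sum => b2 _.
have [c hc] := hA b (B + b2)%N (or_intror (leq_addr _ _)).
have [d hd] := hC (B + b2)%N b (or_introl (leq_addr _ _)).
rewrite (eq_bigr (fun _ => c * d)); last first.
  move=> s _; rewrite (eq_bigr (fun t : 'I_k => if (t : nat) == s then c * d else 0)).
    by apply: sum1.
  move=> t _; have -> : (1 + k * B + k * b2 + t = 1 + k * (B + b2) + t)%N by rewrite mulnDr addnA.
  rewrite hc ?hd ?ltn_ord // eq_sym; case: eqP => _; by rewrite ?mulr0.
by rewrite sumr_const card_ord -mulr_natr natz dvdz_mull.
Qed.
End Inv.


Section Inv2.
Local Open Scope ring_scope.

Lemma split_sum (G : nat -> nat -> int) H M : (H <= M)%N ->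
  \sum_(i < H) \sum_(l < M) G i l =
  \sum_(0 <= i < H) \sum_(0 <= l < H) G i l + \sum_(0 <= i < H) \sum_(H <= l < M) G i l.
Proof.
move=> hHM; rewrite -big_split /=.
transitivity (\sum_(0 <= i < H) \sum_(l < M) G i l); first by rewrite big_mkord.
apply: eq_bigr => i _.
by rewrite -(@big_cat_nat _ _ _ H) // big_mkord.
Qed.

Lemma swap_split (F : nat -> nat -> int) H M : (H <= M)%N ->
  \sum_(i < H) \sum_(l < M) F i l - \sum_(l < H) \sum_(i < M) F i l =
  \sum_(0 <= i < H) \sum_(H <= l < M) F i l - \sum_(0 <= l < H) \sum_(H <= i < M) F i l.
Proof.
move=> hHM; rewrite (split_sum F hHM) (split_sum (fun l i => F i l) hHM).
rewrite (exchange_big_nat _ 0 H 0 H) /=.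
set a := \sum_(0 <= j < H) _; set b := \sum_(0 <= i < H) _; set c := \sum_(0 <= l < H) _.
ring.
Qed.
End Inv2.

Section Inv3.
Local Open Scope ring_scope.
Lemma invariant k m n : (0 < k)%N -> Rk_free_iso k m n -> m = n %[mod k].
Proof.
move=> hk [X [Y [hX [hY [hXY hYX]]]]].
have [B hB] : exists B, forall (x : 'I_m * 'I_n) M, (B <= M)%N ->
   [/\ bb k (X x.1 x.2) M, bb k (Y x.2 x.1) M,
       (forall l, (1 + k * M <= l)%N -> X x.1 x.2 0%N l = 0) &
       (forall l, (1 + k * M <= l)%N -> Y x.2 x.1 0%N l = 0)].
  apply: ubound_fin => -[p q] /=.
  have [[rX _] [BX hBX]] := hX p q.
  have [[rY _] [BY hBY]] := hY q p.
  have [NX hNX] := rX 0%N; have [NY hNY] := rY 0%N.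
  exists (maxn (maxn BX BY) (maxn NX NY)) => M hM.
  have hkM : (M <= k * M)%N by rewrite leq_pmull.
  split.
  - by apply: (bb_mono hBX); lia.
  - by apply: (bb_mono hBY); lia.
  - by move=> l hl; apply: hNX; lia.
  - by move=> l hl; apply: hNY; lia.
set H := (1 + k * B)%N.
have [D1 hD1] : exists D, forall (p : 'I_m) M, (D <= M)%N -> forall i, (i < H)%N ->
    \sum_(q < n) \sum_(l < M) X p q i l * Y q p l i = 1.
  apply: ubound_fin => p.
  have [N hN] : exists N, forall i, (i < H)%N -> forall M, (N <= M)%N ->
      \sum_(q < n) \sum_(l < M) X p q i l * Y q p l i = 1.
    apply: (@ubound_nat H (fun i M => \sum_(q < n) \sum_(l < M) X p q i l * Y q p l i = 1)) => i _.
    have [N hN] := hXY p p i i; exists N => M hM; by rewrite hN // /mx_idR eqxx /idR eqxx.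
  by exists N => M hM i hi; apply: hN.
have [D2 hD2] : exists D, forall (q : 'I_n) M, (D <= M)%N -> forall l, (l < H)%N ->
    \sum_(p < m) \sum_(i < M) Y q p l i * X p q i l = 1.
  apply: ubound_fin => q.
  have [N hN] : exists N, forall l, (l < H)%N -> forall M, (N <= M)%N ->
      \sum_(p < m) \sum_(i < M) Y q p l i * X p q i l = 1.
    apply: (@ubound_nat H (fun l M => \sum_(p < m) \sum_(i < M) Y q p l i * X p q i l = 1)) => l _.
    have [N hN] := hYX q q l l; exists N => M hM; by rewrite hN // /mx_idR eqxx /idR eqxx.
  by exists N => M hM l hl; apply: hN.
set D := maxn D1 D2.
set M := (H + k * D)%N.
have hkD : (D <= k * D)%N by rewrite leq_pmull.
have hM1 : (D1 <= M)%N by rewrite /M /D; lia.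
have hM2 : (D2 <= M)%N by rewrite /M /D; lia.
have hHM : (H <= M)%N by rewrite leq_addr.
have T1 : \sum_(p < m) \sum_(q < n) \sum_(i < H) \sum_(l < M) X p q i l * Y q p l i = (m * H)%:R.
  transitivity (\sum_(p < m) \sum_(i < H) (1 : int)).
    apply: eq_bigr => p _; rewrite exchange_big; apply: eq_bigr => i _; exact: hD1.
  rewrite (eq_bigr (fun _ => H%:R)); last by move=> p _; rewrite sumr_const card_ord.
  by rewrite sumr_const card_ord mulnC natrM mulr_natr.
have T2 : \sum_(p < m) \sum_(q < n) \sum_(l < H) \sum_(i < M) X p q i l * Y q p l i = (n * H)%:R.
  rewrite exchange_big /=.
  transitivity (\sum_(q < n) \sum_(l < H) (1 : int)); last first.
    rewrite (eq_bigr (fun _ => H%:R)); last by move=> q _; rewrite sumr_const card_ord.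
    by rewrite sumr_const card_ord mulnC natrM mulr_natr.
  apply: eq_bigr => q _; rewrite exchange_big; apply: eq_bigr => l hl.
  rewrite -(hD2 q M hM2 l (ltn_ord l)); apply: eq_bigr => p _; apply: eq_bigr => i _.
  by rewrite mulrC.
have Hd : (k%:Z %| (m * H)%:R - (n * H)%:R)%Z.
  rewrite -T1 -T2 -sumrB; apply: rpred_sum => p _; rewrite -sumrB; apply: rpred_sum => q _.
  rewrite (swap_split (fun i l => X p q i l * Y q p l i) hHM).
  have [h1 h2 h3 h4] := hB (p, q) B (leqnn B).
  apply: rpredB; first exact: cross_dvd.
  under eq_bigr => l _ do under eq_bigr => i _ do rewrite mulrC.
  exact: cross_dvd.
have : (k%:Z %| m%:Z - n%:Z)%Z.
  have -> : m%:Z - n%:Z = ((m * H)%:R - (n * H)%:R) - k%:Z * (B%:Z * (m%:Z - n%:Z)).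
    rewrite /H !natrM !natrD !natrM !natz; ring.
  by rewrite rpredB // dvdz_mulr // dvdzz.
rewrite -eqz_mod_dvd !modz_nat => /eqP; case.
done.
Qed.
End Inv3.


Theorem theorem3 (k : nat) (hk : (0 < k)%N) (m n : nat) (hm : (0 < m)%N) (hn : (0 < n)%N) :
  Rk_free_iso k m n <-> m = n %[mod k].
Proof.
split; first exact: invariant.
move=> hmod.
have gen : forall a b, (0 < a)%N -> (a <= b)%N -> a = b %[mod k] -> Rk_free_iso k a b.
  move=> a b ha hab hab'.
  have hd : (k %| b - a)%N by rewrite -eqn_mod_dvd // hab'.
  have -> : b = (a + k * ((b - a) %/ k))%N by rewrite mulnC divnK // subnKC.
  exact: iso_step.
case: (leqP m n) => h; first exact: gen.
by apply: iso_sym; apply: gen => //; apply: ltnW.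
Qed.
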